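(* For every integer $n\geq 1$ there exists a $4$-dimensional Minkowski space $X$ whose norm is smooth and strictly convex and such that $m(X)\geq n$.
   Context: A Minkowski space is a finite-dimensional real normed space $(X,\|\cdot\|)$. For a set $S\subseteq X$, its midpoint set is $M(S)=\{\tfrac12(x+y): x,y\in S,\ x\neq y\}$. A set $S\subseteq X$ is an M-set if every vector in $M(S)$ has norm exactly $1$ and every vector in $S$ has norm strictly greater than $1$. $m(X)$ denotes the largest cardinality of an M-set in $X$ if such a largest finite cardinality exists, and $m(X)=\infty$ otherwise. The norm is smooth if each boundary point of the unit ball has a unique supporting hyperplane, and strictly convex if the unit sphere contains no nondegenerate line segment. *)

(* Defs.v *)
(* real numbers. A 4-dimensional Minkowski space is modelled,
   up to linear isometry, as R^4 equipped with an arbitrary norm. *)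
From Stdlib Require Import Reals List.
Open Scope R_scope.

Record V4 : Type := mkV4 { c0 : R; c1 : R; c2 : R; c3 : R }.

Definition vadd (x y : V4) : V4 :=
  mkV4 (c0 x + c0 y) (c1 x + c1 y) (c2 x + c2 y) (c3 x + c3 y).
Definition vscale (t : R) (x : V4) : V4 :=
  mkV4 (t * c0 x) (t * c1 x) (t * c2 x) (t * c3 x).
Definition vzero : V4 := mkV4 0 0 0 0.
Definition dot (a y : V4) : R :=
  c0 a * c0 y + c1 a * c1 y + c2 a * c2 y + c3 a * c3 y.

Definition is_norm (N : V4 -> R) : Prop :=
  (forall x, 0 <= N x) /\
  (forall x, N x = 0 -> x = vzero) /\
  (forall t x, N (vscale t x) = Rabs t * N x) /\
  (forall x y, N (vadd x y) <= N x + N y).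

(* The hyperplane {y | dot a y = 1} supports the unit ball at the boundary point x.
   (Every supporting hyperplane at x is of this form, since 0 is interior.) *)
Definition supporting (N : V4 -> R) (x a : V4) : Prop :=
  dot a x = 1 /\ forall y, N y <= 1 -> dot a y <= 1.

Definition smooth (N : V4 -> R) : Prop :=
  forall x, N x = 1 -> exists a, supporting N x a /\
    forall b, supporting N x b -> b = a.

Definition strictly_convex (N : V4 -> R) : Prop :=
  forall x y, x <> y ->
    ~ (forall t, 0 <= t <= 1 -> N (vadd (vscale (1 - t) x) (vscale t y)) = 1).

Definition midpoint (x y : V4) : V4 := vscale (/ 2) (vadd x y).

Definition M_set (N : V4 -> R) (S : list V4) : Prop :=
  NoDup S /\
  (forall x, In x S -> 1 < N x) /\
  (forall x y, In x S -> In y S -> x <> y -> N (midpoint x y) = 1).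

(* Main.v *)
Require Import Defs.
From Stdlib Require Import Reals List Lra Lia Psatz Classical.
Open Scope R_scope.

Lemma dot_sym x y : dot x y = dot y x.
Proof. destruct x, y; unfold dot; simpl; ring. Qed.
Lemma dot_add_r x y z : dot x (vadd y z) = dot x y + dot x z.
Proof. destruct x, y, z; unfold dot, vadd; simpl; ring. Qed.
Lemma dot_add_l x y z : dot (vadd y z) x = dot y x + dot z x.
Proof. destruct x, y, z; unfold dot, vadd; simpl; ring. Qed.
Lemma dot_scale_r x t y : dot x (vscale t y) = t * dot x y.
Proof. destruct x, y; unfold dot, vscale; simpl; ring. Qed.
Lemma dot_scale_l x t y : dot (vscale t y) x = t * dot y x.
Proof. destruct x, y; unfold dot, vscale; simpl; ring. Qed.
Lemma dot_pos x : 0 <= dot x x.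
Proof. destruct x; unfold dot; simpl; nra. Qed.
Lemma dot_zero x : dot x x = 0 -> x = vzero.
Proof. destruct x as [a b c d]; unfold dot, vzero; simpl; intro H.
  assert (a = 0) by nra. assert (b = 0) by nra. assert (c = 0) by nra.
  assert (d = 0) by nra. subst; reflexivity. Qed.
Lemma dot_vzero x : dot x vzero = 0.
Proof. destruct x; unfold dot, vzero; simpl; ring. Qed.
Lemma cs_dot x y : (dot x y)^2 <= dot x x * dot y y.
Proof. destruct x as [a b c d], y as [a' b' c' d']; unfold dot; simpl.
  assert (E: (a*a+b*b+c*c+d*d)*(a'*a'+b'*b'+c'*c'+d'*d') - (a*a'+b*b'+c*c'+d*d')^2
   = (a*b'-b*a')^2 + (a*c'-c*a')^2 + (a*d'-d*a')^2 + (b*c'-c*b')^2 + (b*d'-d*b')^2 + (c*d'-d*c')^2) by ring.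
  assert (0 <= (a*b'-b*a')^2 + (a*c'-c*a')^2 + (a*d'-d*a')^2 + (b*c'-c*b')^2 + (b*d'-d*b')^2 + (c*d'-d*c')^2)
    by (repeat apply Rplus_le_le_0_compat; apply pow2_ge_0).
  lra. Qed.

Definition enorm x := sqrt (dot x x).
Lemma enorm_pos x : 0 <= enorm x.
Proof. apply sqrt_pos. Qed.
Lemma enorm_sq x : enorm x * enorm x = dot x x.
Proof. apply sqrt_sqrt, dot_pos. Qed.
Lemma enorm_cs x y : Rabs (dot x y) <= enorm x * enorm y.
Proof. unfold enorm. rewrite <- sqrt_mult by apply dot_pos.
  rewrite <- sqrt_Rsqr_abs. apply sqrt_le_1. apply Rle_0_sqr.
  apply Rmult_le_pos; apply dot_pos. pose proof (cs_dot x y). unfold Rsqr. simpl in H. lra. Qed.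
Lemma enorm_scale t x : enorm (vscale t x) = Rabs t * enorm x.
Proof. unfold enorm. rewrite dot_scale_l, dot_scale_r, <- Rmult_assoc.
  rewrite sqrt_mult_alt by (apply Rle_0_sqr). f_equal. apply sqrt_Rsqr_abs. Qed.
Lemma enorm_zero x : enorm x = 0 -> x = vzero.
Proof. unfold enorm; intro H. apply dot_zero. apply sqrt_eq_0; auto. apply dot_pos. Qed.
Lemma enorm_pos_lt x : x <> vzero -> 0 < enorm x.
Proof. intro H. destruct (enorm_pos x) as [h|h]; auto. exfalso; apply H, enorm_zero; auto. Qed.

Definition psd (A : V4 -> V4 -> R) : Prop :=
  (forall x y, A x y = A y x) /\
  (forall x y z, A x (vadd y z) = A x y + A x z) /\
  (forall x t y, A x (vscale t y) = t * A x y) /\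
  (forall x, 0 <= A x x).

Lemma psd_expand A y z t : psd A ->
  A (vadd y (vscale t z)) (vadd y (vscale t z)) = A y y + 2 * t * A y z + t * t * A z z.
Proof. intros (Hs & Ha & Hm & Hp).
  rewrite Ha, Hm. rewrite (Hs (vadd y _) y), (Hs (vadd y _) z).
  rewrite !Ha, !Hm. rewrite (Hs z y). ring. Qed.

Lemma psd_cs A y z : psd A -> (A y z)^2 <= A y y * A z z.
Proof. intro HA. pose proof HA as (Hs & Ha & Hm & Hp).
  pose proof (Hp y) as Hy. pose proof (Hp z) as Hz.
  destruct Hz as [Hz|Hz].
  - pose proof (Hp (vadd y (vscale (- A y z / A z z) z))) as H.
    rewrite psd_expand in H by auto.
    assert (E: A y y + 2 * (- A y z / A z z) * A y z + (- A y z / A z z) * (- A y z / A z z) * A z z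
      = (A y y * A z z - (A y z)^2) / A z z) by (field; lra).
    rewrite E in H. assert (0 <= A y y * A z z - A y z ^ 2).
    { apply Rmult_le_reg_r with (/ A z z). apply Rinv_0_lt_compat; auto.
      rewrite Rmult_0_l. exact H. }
    lra.
  - rewrite <- Hz. destruct (Req_dec (A y z) 0) as [e|ne].
    + rewrite e. lra.
    + exfalso. pose proof (Hp (vadd y (vscale (- (A y y + 1) / (2 * A y z)) z))) as H.
      rewrite psd_expand in H by auto. rewrite <- Hz in H.
      assert (E: A y y + 2 * (- (A y y + 1) / (2 * A y z)) * A y z = -1) by (field; auto).
      lra. Qed.

Lemma psd_scale2 A t y : psd A -> A (vscale t y) (vscale t y) = t * t * A y y.
Proof. intros (Hs & Ha & Hm & Hp). rewrite Hm, Hs, Hm. ring. Qed.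

Definition cert (Q : V4 -> R) (x : V4) (A : V4 -> V4 -> R) (g : V4) : Prop :=
  psd A /\ (forall h, A x h = dot g h) /\ A x x = Q x /\ (forall y, A y y <= Q y).

Definition upper (Q : V4 -> R) (x g : V4) : Prop :=
  forall eta, 0 < eta -> exists r, 0 < r /\ forall h, enorm h <= r ->
     Q (vadd x h) <= Q x + 2 * dot g h + eta * enorm h.

Definition goodQ (Q : V4 -> R) : Prop :=
  forall x, exists A g, cert Q x A g /\ (x <> vzero -> upper Q x g).

Definition posQ (Q : V4 -> R) : Prop := forall x, x <> vzero -> 0 < Q x.

Lemma goodQ_nonneg Q y : goodQ Q -> 0 <= Q y.
Proof. intro H. destruct (H y) as (A & g & (HA & _ & Hxx & _) & _).
  rewrite <- Hxx. apply HA. Qed.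

Lemma goodQ_hom Q t y : goodQ Q -> Q (vscale t y) = t * t * Q y.
Proof. intro H.
  assert (L: forall s z, Q (vscale s z) <= s * s * Q z).
  { intros s z. destruct (H (vscale s z)) as (A & g & (HA & _ & Hxx & Hle) & _).
    rewrite <- Hxx, psd_scale2 by auto. pose proof (Hle z).
    apply Rmult_le_compat_l; [apply Rle_0_sqr | auto]. }
  apply Rle_antisym; auto.
  destruct (Req_dec t 0) as [e|ne].
  - subst. rewrite Rmult_0_l, Rmult_0_l. apply (goodQ_nonneg Q _ H).
  - pose proof (L (/ t) (vscale t y)) as L2.
    assert (E: vscale (/ t) (vscale t y) = y).
    { destruct y; unfold vscale; simpl. f_equal; field; auto. }
    rewrite E in L2.
    assert (0 < t * t) by nra.
    apply Rmult_le_reg_l with (/ t * / t). { rewrite <- Rinv_mult; apply Rinv_0_lt_compat; auto. }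
    replace (/ t * / t * (t * t * Q y)) with (Q y) by (field; auto). lra. Qed.

Definition clip (z : R) := Rmax (-1) (Rmin 1 z).
Definition alpha d c := (1 + c)/2 + d * (1 - c*c)/4.
Definition beta d c := (1 - c)/2 + d * (1 - c*c)/4.
Definition cstar d a b := clip ((a - b) / (d * (a + b))).
Definition Phi d a b c := alpha d c * a + beta d c * b.
Definition sm d a b := Phi d a b (cstar d a b).

Lemma clip_range z : -1 <= clip z <= 1.
Proof. unfold clip, Rmax, Rmin. repeat destruct Rle_dec; lra. Qed.

Lemma clip_cases z : (clip z = z /\ -1 <= z <= 1) \/ (clip z = 1 /\ 1 <= z) \/ (clip z = -1 /\ z <= -1).
Proof. unfold clip, Rmax, Rmin. repeat destruct Rle_dec; lra. Qed.

Lemma alpha_nonneg d c : 0 <= d -> -1 <= c <= 1 -> 0 <= alpha d c.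
Proof. intros; unfold alpha.
  assert (0 <= 1 - c*c) by nra. assert (0 <= d * (1-c*c)) by (apply Rmult_le_pos; lra). lra. Qed.
Lemma beta_nonneg d c : 0 <= d -> -1 <= c <= 1 -> 0 <= beta d c.
Proof. intros; unfold beta.
  assert (0 <= 1 - c*c) by nra. assert (0 <= d * (1-c*c)) by (apply Rmult_le_pos; lra). lra. Qed.

Lemma sm_key d a b c : 0 < d -> 0 <= a -> 0 <= b -> -1 <= c <= 1 ->
  Phi d a b c <= sm d a b - d * (a + b) / 4 * (c - cstar d a b)^2.
Proof. intros Hd Ha Hb Hc. unfold sm.
  set (cs := cstar d a b).
  assert (E: Phi d a b cs - d * (a + b) / 4 * (c - cs)^2 - Phi d a b c
     = (cs - c) * ((a - b) - d * (a + b) * cs) / 2) by (unfold Phi, alpha, beta; field).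
  assert (0 <= (cs - c) * ((a - b) - d * (a + b) * cs) / 2); [|lra].
  destruct (Req_dec (a + b) 0) as [e|ne].
  - assert (a = 0) by lra. assert (b = 0) by lra. subst. 
    replace (0 - 0 - d * (0 + 0) * cs) with 0 by ring. lra.
  - assert (S: 0 < a + b) by lra.
    unfold cs, cstar. destruct (clip_cases ((a - b) / (d * (a + b)))) as [(e & r)|[(e & r)|(e & r)]];
      rewrite e.
    + replace (a - b - d * (a + b) * ((a - b) / (d * (a + b)))) with 0 by (field; lra). lra.
    + assert (a - b >= d * (a + b)).
      { apply Rle_ge. replace (a - b) with ((a - b) / (d * (a + b)) * (d * (a + b))) by (field; lra).
        assert (0 < d * (a + b)) by nra. nra. }
      nra.
    + assert (a - b <= - (d * (a + b))).
      { replace (a - b) with ((a - b) / (d * (a + b)) * (d * (a + b))) by (field; lra).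
        assert (0 < d * (a + b)) by nra. nra. }
      nra. Qed.

Lemma cstar_range d a b : -1 <= cstar d a b <= 1.
Proof. apply clip_range. Qed.

Lemma sm_ge_a d a b : 0 < d -> 0 <= a -> 0 <= b -> a <= sm d a b.
Proof. intros. pose proof (sm_key d a b 1 H H0 H1 ltac:(lra)).
  assert (Phi d a b 1 = a) by (unfold Phi, alpha, beta; field).
  pose proof (pow2_ge_0 (1 - cstar d a b)). assert (0 <= d * (a + b) / 4) by (apply Rmult_le_pos; [nra|lra]).
  nra. Qed.

Lemma sm_ge_b d a b : 0 < d -> 0 <= a -> 0 <= b -> b <= sm d a b.
Proof. intros. pose proof (sm_key d a b (-1) H H0 H1 ltac:(lra)).
  assert (Phi d a b (-1) = b) by (unfold Phi, alpha, beta; field).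
  pose proof (pow2_ge_0 (-1 - cstar d a b)). assert (0 <= d * (a + b) / 4) by (apply Rmult_le_pos; [nra|lra]).
  nra. Qed.

Lemma sm_le d a b m : 0 < d -> 0 <= a -> 0 <= b -> a <= m -> b <= m -> sm d a b <= (1 + d) * m.
Proof. intros. unfold sm, Phi. pose proof (cstar_range d a b) as Hc.
  set (c := cstar d a b) in *.
  pose proof (alpha_nonneg d c ltac:(lra) Hc). pose proof (beta_nonneg d c ltac:(lra) Hc).
  assert (alpha d c + beta d c <= 1 + d) by (unfold alpha, beta; nra).
  assert (alpha d c * a <= alpha d c * m) by (apply Rmult_le_compat_l; auto).
  assert (beta d c * b <= beta d c * m) by (apply Rmult_le_compat_l; auto).
  assert (0 <= m) by lra. nra. Qed.

Lemma sm_eq_a d a b : 0 < d -> 0 <= a -> 0 <= b -> b * (1 + d) <= a * (1 - d) -> sm d a b = a.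
Proof. intros. unfold sm, cstar.
  destruct (Req_dec (a + b) 0) as [e|ne].
  - assert (a = 0) by lra. assert (b = 0) by lra. subst. unfold Phi; field.
  - assert (1 <= (a - b) / (d * (a + b))).
    { assert (0 < d * (a + b)) by nra. apply Rmult_le_reg_r with (d * (a + b)); auto.
      replace ((a - b) / (d * (a + b)) * (d * (a + b))) with (a - b) by (field; lra). lra. }
    destruct (clip_cases ((a - b) / (d * (a + b)))) as [(e & r)|[(e & r)|(e & r)]]; rewrite e.
    + assert ((a - b) / (d * (a + b)) = 1) by lra. rewrite H4. unfold Phi, alpha, beta; field.
    + unfold Phi, alpha, beta; field.
    + lra. Qed.

Lemma sm_eq_b d a b : 0 < d -> 0 <= a -> 0 <= b -> a * (1 + d) <= b * (1 - d) -> sm d a b = b.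
Proof. intros. unfold sm, cstar.
  destruct (Req_dec (a + b) 0) as [e|ne].
  - assert (a = 0) by lra. assert (b = 0) by lra. subst. unfold Phi; field.
  - assert ((a - b) / (d * (a + b)) <= -1).
    { assert (0 < d * (a + b)) by nra. apply Rmult_le_reg_r with (d * (a + b)); auto.
      replace ((a - b) / (d * (a + b)) * (d * (a + b))) with (a - b) by (field; lra). lra. }
    destruct (clip_cases ((a - b) / (d * (a + b)))) as [(e & r)|[(e & r)|(e & r)]]; rewrite e.
    + assert ((a - b) / (d * (a + b)) = -1) by lra. rewrite H4. unfold Phi, alpha, beta; field.
    + lra.
    + unfold Phi, alpha, beta; field. Qed.

Lemma amgm_bound k u B : 0 < k -> - k * u^2 + u * B <= B^2 / (4 * k).
Proof. intros. assert (E: B^2 / (4*k) - (- k * u^2 + u * B) = (2*k*u - B)^2 / (4*k)) by (field; lra).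
  assert (0 <= (2*k*u - B)^2 / (4*k)). { apply Rmult_le_pos. apply pow2_ge_0.
    left; apply Rinv_0_lt_compat; lra. } lra. Qed.

Lemma alpha_diff d c c' : 0 <= d <= 1 -> -1 <= c <= 1 -> -1 <= c' <= 1 ->
  Rabs (alpha d c' - alpha d c) <= Rabs (c' - c) /\ Rabs (beta d c' - beta d c) <= Rabs (c' - c).
Proof. intros. 
  assert (Ea: alpha d c' - alpha d c = (c' - c) * (1/2 - d * (c' + c) / 4)) by (unfold alpha; field).
  assert (Eb: beta d c' - beta d c = (c' - c) * (- 1/2 - d * (c' + c) / 4)) by (unfold beta; field).
  assert (B1: Rabs (1/2 - d * (c' + c) / 4) <= 1).
  { apply Rabs_le. assert (-2 <= c'+c <= 2) by lra.
    assert (- 2 * d <= d * (c' + c) <= 2 * d) by nra. lra. }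
  assert (B2: Rabs (- 1/2 - d * (c' + c) / 4) <= 1).
  { apply Rabs_le. assert (-2 <= c'+c <= 2) by lra.
    assert (- 2 * d <= d * (c' + c) <= 2 * d) by nra. lra. }
  rewrite Ea, Eb, !Rabs_mult. pose proof (Rabs_pos (c' - c)).
  split; [rewrite <- (Rmult_1_r (Rabs (c'-c))) at 2 | rewrite <- (Rmult_1_r (Rabs (c'-c))) at 2];
  apply Rmult_le_compat_l; auto. Qed.

Lemma sm_good d Q1 Q2 : 0 < d < 1 -> goodQ Q1 -> goodQ Q2 -> posQ Q2 ->
  goodQ (fun y => sm d (Q1 y) (Q2 y)).
Proof. intros Hd H1 H2 P2 x.
  destruct (H1 x) as (A1 & g1 & (PA1 & G1 & X1 & L1) & U1).
  destruct (H2 x) as (A2 & g2 & (PA2 & G2 & X2 & L2) & U2).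
  pose proof (cstar_range d (Q1 x) (Q2 x)) as Hc.
  set (c := cstar d (Q1 x) (Q2 x)) in *.
  pose proof (alpha_nonneg d c ltac:(lra) Hc) as Hal.
  pose proof (beta_nonneg d c ltac:(lra) Hc) as Hbe.
  set (al := alpha d c) in *. set (be := beta d c) in *.
  exists (fun y z => al * A1 y z + be * A2 y z), (vadd (vscale al g1) (vscale be g2)).
  split; [split; [|split; [|split]]|].
  - destruct PA1 as (S1 & A1a & M1 & P1). destruct PA2 as (S2 & A2a & M2 & P2').
    split; [|split; [|split]].
    + intros; rewrite S1, S2; ring.
    + intros; rewrite A1a, A2a; ring.
    + intros; rewrite M1, M2; ring.
    + intros. pose proof (P1 x0). pose proof (P2' x0).
      apply Rplus_le_le_0_compat; apply Rmult_le_pos; auto.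
  - intro h. rewrite dot_add_l, !dot_scale_l, G1, G2. ring.
  - rewrite X1, X2. unfold sm, Phi. fold c. fold al be. ring.
  - intro y. pose proof (goodQ_nonneg Q1 y H1). pose proof (goodQ_nonneg Q2 y H2).
    pose proof (sm_key d (Q1 y) (Q2 y) c ltac:(lra) H H0 Hc).
    pose proof (L1 y). pose proof (L2 y).
    assert (al * A1 y y <= al * Q1 y) by (apply Rmult_le_compat_l; auto).
    assert (be * A2 y y <= be * Q2 y) by (apply Rmult_le_compat_l; auto).
    assert (0 <= d * (Q1 y + Q2 y) / 4 * (c - cstar d (Q1 y) (Q2 y)) ^ 2).
    { apply Rmult_le_pos. apply Rmult_le_pos. apply Rmult_le_pos; lra. lra. apply pow2_ge_0. }
    unfold Phi in H3. fold al be in H3. lra.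
  - intros Hx eta Heta.
    pose proof (P2 x Hx) as Pos2. pose proof (goodQ_nonneg Q1 x H1) as Pos1.
    set (k := d * (Q1 x + Q2 x) / 4).
    assert (Hk: 0 < k). { unfold k. assert (0 < d * (Q1 x + Q2 x)) by (apply Rmult_lt_0_compat; lra). lra. }
    destruct (U1 Hx (eta/8) ltac:(lra)) as (r1 & Hr1 & B1).
    destruct (U2 Hx (eta/8) ltac:(lra)) as (r2 & Hr2 & B2).
    set (G := enorm g1 + enorm g2 + 1).
    assert (HG: 1 <= G) by (unfold G; pose proof (enorm_pos g1); pose proof (enorm_pos g2); lra).
    set (r3 := eta * k / (2 * G * G)).
    assert (Hr3: 0 < r3). { unfold r3. apply Rmult_lt_0_compat. apply Rmult_lt_0_compat; lra.
      apply Rinv_0_lt_compat. nra. }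
    exists (Rmin r1 (Rmin r2 r3)). split.
    { apply Rmin_glb_lt; auto. apply Rmin_glb_lt; auto. }
    intros h Hh.
    assert (h1: enorm h <= r1) by (eapply Rle_trans; [exact Hh| apply Rmin_l]).
    assert (h2: enorm h <= r2) by (eapply Rle_trans; [exact Hh| eapply Rle_trans; [apply Rmin_r| apply Rmin_l]]).
    assert (h3: enorm h <= r3) by (eapply Rle_trans; [exact Hh| eapply Rle_trans; [apply Rmin_r| apply Rmin_r]]).
    pose proof (B1 h h1) as b1. pose proof (B2 h h2) as b2. clear B1 B2.
    set (a' := Q1 (vadd x h)) in *. set (b' := Q2 (vadd x h)) in *.
    pose proof (goodQ_nonneg Q1 (vadd x h) H1) as Pa'. pose proof (goodQ_nonneg Q2 (vadd x h) H2) as Pb'.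
    fold a' in Pa'. fold b' in Pb'.
    pose proof (cstar_range d a' b') as Hc'.
    set (c' := cstar d a' b') in *.
    pose proof (alpha_nonneg d c' ltac:(lra) Hc') as Hal'.
    pose proof (beta_nonneg d c' ltac:(lra) Hc') as Hbe'.
    set (e := eta / 8 * enorm h).
    set (La := 2 * dot g1 h). set (Lb := 2 * dot g2 h).
    assert (S1: sm d a' b' <= alpha d c' * (Q1 x + La + e) + beta d c' * (Q2 x + Lb + e)).
    { unfold sm, Phi. fold c'. apply Rplus_le_compat; apply Rmult_le_compat_l; auto. }
    pose proof (sm_key d (Q1 x) (Q2 x) c' ltac:(lra) Pos1 ltac:(lra) Hc') as K.
    fold c in K. fold k in K. unfold Phi in K.
    destruct (alpha_diff d c c' ltac:(lra) Hc Hc') as (Da & Db). fold al be in Da, Db.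
    assert (HLa: Rabs La <= 2 * enorm g1 * enorm h).
    { unfold La. rewrite Rabs_mult, Rabs_pos_eq by lra. pose proof (enorm_cs g1 h). lra. }
    assert (HLb: Rabs Lb <= 2 * enorm g2 * enorm h).
    { unfold Lb. rewrite Rabs_mult, Rabs_pos_eq by lra. pose proof (enorm_cs g2 h). lra. }
    set (u := Rabs (c' - c)).
    assert (T1: (alpha d c' - al) * La <= u * Rabs La).
    { eapply Rle_trans. apply Rle_abs. rewrite Rabs_mult. apply Rmult_le_compat_r; auto. apply Rabs_pos. }
    assert (T2: (beta d c' - be) * Lb <= u * Rabs Lb).
    { eapply Rle_trans. apply Rle_abs. rewrite Rabs_mult. apply Rmult_le_compat_r; auto. apply Rabs_pos. }
    assert (T3: u * Rabs La + u * Rabs Lb <= u * (2 * G * enorm h)).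
    { assert (0 <= u) by apply Rabs_pos. pose proof (enorm_pos h). pose proof (enorm_pos g1).
      pose proof (enorm_pos g2). rewrite <- Rmult_plus_distr_l. apply Rmult_le_compat_l; auto.
      unfold G. nra. }
    assert (Hu2: (c' - c)^2 = u^2). { unfold u. unfold Rabs; destruct Rcase_abs; ring. }
    pose proof (amgm_bound k u (2 * G * enorm h) Hk) as AM.
    assert (T4: (2 * G * enorm h)^2 / (4 * k) <= eta / 2 * enorm h).
    { pose proof (enorm_pos h).
      assert (E: (2 * G * enorm h)^2 / (4 * k) = (G * G * enorm h) * enorm h / k) by (field; lra).
      rewrite E. apply Rmult_le_reg_r with k; auto.
      replace (G * G * enorm h * enorm h / k * k) with (G * G * enorm h * enorm h) by (field; lra).
      assert (G * G * enorm h <= eta * k / 2).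
      { unfold r3 in h3. assert (0 < G * G) by nra.
        apply Rmult_le_reg_r with (/ (G*G)). apply Rinv_0_lt_compat; auto.
        replace (G * G * enorm h * / (G * G)) with (enorm h) by (field; lra).
        replace (eta * k / 2 * / (G * G)) with (eta * k / (2 * G * G)) by (field; lra). auto. }
      assert (G * G * enorm h * enorm h <= eta * k / 2 * enorm h) by (apply Rmult_le_compat_r; auto).
      lra. }
    assert (T5: (alpha d c' + beta d c') * e <= 2 * e).
    { apply Rmult_le_compat_r. unfold e. pose proof (enorm_pos h). apply Rmult_le_pos; lra.
      unfold alpha, beta. assert (0 <= c' * c') by nra. assert (d * (1 - c'*c') <= 2) by nra. lra. }
    assert (E2: dot (vadd (vscale al g1) (vscale be g2)) h = al * dot g1 h + be * dot g2 h)
      by (rewrite dot_add_l, !dot_scale_l; ring).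
    rewrite E2. unfold e in *. unfold La, Lb in *.
    assert (EX: sm d (Q1 x) (Q2 x) = al * Q1 x + be * Q2 x) by (unfold sm, Phi; fold c; fold al be; ring).
    rewrite EX in K |- *.
    rewrite Hu2 in K.
    assert (E3: alpha d c' * (Q1 x + 2 * dot g1 h + eta / 8 * enorm h) + beta d c' * (Q2 x + 2 * dot g2 h + eta / 8 * enorm h)
       = (alpha d c' * Q1 x + beta d c' * Q2 x) + (alpha d c' - al) * (2 * dot g1 h) + (beta d c' - be) * (2 * dot g2 h)
         + al * (2 * dot g1 h) + be * (2 * dot g2 h) + (alpha d c' + beta d c') * (eta / 8 * enorm h)) by ring.
    rewrite E3 in S1.
    assert (0 <= eta * enorm h) by (apply Rmult_le_pos; [lra|apply enorm_pos]).
    clearbody al be k G r3 a' b' c' e La Lb u c. lra. Qed.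

Lemma sm_pos d Q1 Q2 : 0 < d -> goodQ Q1 -> goodQ Q2 -> posQ Q2 -> posQ (fun y => sm d (Q1 y) (Q2 y)).
Proof. intros Hd H1 H2 P x Hx. pose proof (P x Hx). pose proof (goodQ_nonneg Q1 x H1).
  pose proof (sm_ge_b d (Q1 x) (Q2 x) Hd H0 ltac:(lra)). lra. Qed.

Definition qv (v : V4) (y : V4) : R := (dot v y)^2.
Definition q0 (rho : R) (y : V4) : R := rho * dot y y.

Lemma qv_good v : goodQ (qv v).
Proof. intro x. exists (fun y z => dot v y * dot v z), (vscale (dot v x) v).
  split; [split; [|split; [|split]]|].
  - split; [|split; [|split]]; intros; try rewrite dot_add_r; try rewrite dot_scale_r; try ring.
    apply Rle_0_sqr.
  - intro h. rewrite dot_scale_l. ring.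
  - unfold qv. ring.
  - intro y. unfold qv. right; ring.
  - intros Hx eta Heta. exists (eta / (dot v v + 1)). split.
    { apply Rdiv_lt_0_compat; auto. pose proof (dot_pos v); lra. }
    intros h Hh. unfold qv. rewrite dot_add_r, dot_scale_l.
    pose proof (cs_dot v h). pose proof (dot_pos v). pose proof (enorm_pos h).
    rewrite <- (enorm_sq h) in H.
    assert (enorm h * (dot v v + 1) <= eta).
    { apply Rmult_le_reg_r with (/ (dot v v + 1)). apply Rinv_0_lt_compat; lra.
      replace (enorm h * (dot v v + 1) * / (dot v v + 1)) with (enorm h) by (field; lra). exact Hh. }
    assert (dot v v * (enorm h * enorm h) <= eta * enorm h).
    { assert (dot v v * enorm h <= eta) by nra. nra. }
    lra. Qed.

Lemma q0_good rho : 0 < rho -> goodQ (q0 rho).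
Proof. intros Hr x. exists (fun y z => rho * dot y z), (vscale rho x).
  split; [split; [|split; [|split]]|].
  - split; [|split; [|split]]; intros.
    + rewrite dot_sym; ring.
    + rewrite dot_add_r; ring.
    + rewrite dot_scale_r; ring.
    + pose proof (dot_pos x0). apply Rmult_le_pos; lra.
  - intro h. rewrite dot_scale_l. ring.
  - unfold q0. ring.
  - intro y. unfold q0. right; ring.
  - intros Hx eta Heta. exists (eta / (rho + 1)). split.
    { apply Rdiv_lt_0_compat; lra. }
    intros h Hh. unfold q0. rewrite dot_add_r, !dot_add_l, dot_scale_l.
    rewrite (dot_sym h x). pose proof (enorm_pos h). rewrite <- (enorm_sq h).
    assert (enorm h * (rho + 1) <= eta).
    { apply Rmult_le_reg_r with (/ (rho + 1)). apply Rinv_0_lt_compat; lra.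
      replace (enorm h * (rho + 1) * / (rho + 1)) with (enorm h) by (field; lra). exact Hh. }
    assert (rho * (enorm h * enorm h) <= eta * enorm h).
    { assert (rho * enorm h <= eta) by nra. nra. }
    lra. Qed.

Lemma q0_pos rho : 0 < rho -> posQ (q0 rho).
Proof. intros Hr x Hx. unfold q0. pose proof (enorm_pos_lt x Hx). rewrite <- enorm_sq. apply Rmult_lt_0_compat; auto; apply Rmult_lt_0_compat; auto. Qed.

Fixpoint SMQ (d rho : R) (vs : list V4) : V4 -> R :=
  match vs with
  | nil => q0 rho
  | v :: r => fun y => sm d (qv v y) (SMQ d rho r y)
  end.

Lemma SMQ_good d rho vs : 0 < d < 1 -> 0 < rho -> goodQ (SMQ d rho vs) /\ posQ (SMQ d rho vs).
Proof. intros Hd Hr. induction vs as [|v r IH]; simpl.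
  - split; [apply q0_good | apply q0_pos]; auto.
  - destruct IH as (G & P). split.
    + apply sm_good; auto. apply qv_good.
    + apply sm_pos; auto. lra. apply qv_good. Qed.

Lemma SMQ_ge d rho vs v y : 0 < d < 1 -> 0 < rho -> In v vs -> qv v y <= SMQ d rho vs y.
Proof. intros Hd Hr. induction vs as [|w r IH]; simpl; [tauto|].
  intros [e|i].
  - subst. apply sm_ge_a. lra. apply pow2_ge_0. apply goodQ_nonneg, SMQ_good; auto.
  - eapply Rle_trans. apply IH; auto. apply sm_ge_b. lra. apply pow2_ge_0. apply goodQ_nonneg, SMQ_good; auto. Qed.

Lemma le_sqrt_prod a X Y : 0 <= X -> 0 <= Y -> a^2 <= X * Y -> a <= sqrt X * sqrt Y.
Proof. intros. rewrite <- sqrt_mult by auto. eapply Rle_trans. apply Rle_abs.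
  rewrite <- sqrt_Rsqr_abs. apply sqrt_le_1. apply Rle_0_sqr. apply Rmult_le_pos; auto.
  unfold Rsqr; simpl in H1; lra. Qed.

Lemma vscale1 z : vscale 1 z = z.
Proof. destruct z; unfold vscale; simpl; f_equal; ring. Qed.

Lemma M_tri Q y z : goodQ Q -> sqrt (Q (vadd y z)) <= sqrt (Q y) + sqrt (Q z).
Proof. intro H. destruct (H (vadd y z)) as (A & g & (PA & _ & Hxx & Hle) & _).
  pose proof (psd_expand A y z 1 PA) as E. rewrite vscale1 in E. rewrite Hxx in E.
  pose proof PA as (_ & _ & _ & Hp).
  assert (C: A y z <= sqrt (A y y) * sqrt (A z z)) by (apply le_sqrt_prod; auto; apply psd_cs; auto).
  pose proof (Hle y). pose proof (Hle z). pose proof (Hp y). pose proof (Hp z).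
  assert (sqrt (A y y) <= sqrt (Q y)) by (apply sqrt_le_1; lra).
  assert (sqrt (A z z) <= sqrt (Q z)) by (apply sqrt_le_1; lra).
  pose proof (sqrt_pos (A y y)). pose proof (sqrt_pos (A z z)).
  assert (Q (vadd y z) <= (sqrt (Q y) + sqrt (Q z))^2).
  { rewrite E. assert (sqrt (A y y) * sqrt (A z z) <= sqrt (Q y) * sqrt (Q z)) by (apply Rmult_le_compat; auto).
    assert (sqrt (Q y) * sqrt (Q y) = Q y) by (apply sqrt_sqrt; apply goodQ_nonneg; auto).
    assert (sqrt (Q z) * sqrt (Q z) = Q z) by (apply sqrt_sqrt; apply goodQ_nonneg; auto).
    nra. }
  rewrite <- (sqrt_pow2 (sqrt (Q y) + sqrt (Q z))).
  apply sqrt_le_1; auto. apply goodQ_nonneg; auto. apply pow2_ge_0.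
  pose proof (sqrt_pos (Q y)); pose proof (sqrt_pos (Q z)); lra. Qed.

Lemma M_hom Q t y : goodQ Q -> sqrt (Q (vscale t y)) = Rabs t * sqrt (Q y).
Proof. intro H. rewrite goodQ_hom by auto. rewrite sqrt_mult_alt by apply Rle_0_sqr.
  f_equal. apply sqrt_Rsqr_abs. Qed.

Lemma enorm_q0 y : enorm y = sqrt (q0 1 y).
Proof. unfold enorm, q0. f_equal; ring. Qed.

Lemma enorm_tri y z : enorm (vadd y z) <= enorm y + enorm z.
Proof. rewrite !enorm_q0. apply M_tri, q0_good; lra. Qed.

Definition Nf (eps : R) (Q : V4 -> R) (x : V4) : R := eps * enorm x + sqrt (Q x).

Lemma Nf_norm eps Q : 0 < eps -> goodQ Q -> is_norm (Nf eps Q).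
Proof. intros He H. unfold Nf. split; [|split; [|split]].
  - intro x. pose proof (enorm_pos x). pose proof (sqrt_pos (Q x)). nra.
  - intros x Hx. pose proof (enorm_pos x). pose proof (sqrt_pos (Q x)).
    apply enorm_zero. assert (eps * enorm x = 0) by nra.
    apply Rmult_integral in H2. destruct H2; lra.
  - intros t x. rewrite enorm_scale, M_hom by auto. ring.
  - intros x y. pose proof (enorm_tri x y). pose proof (M_tri Q x y H). nra. Qed.

Lemma sqrt_up A D : 0 < A -> 0 <= A + D -> sqrt (A + D) <= sqrt A + D / (2 * sqrt A).
Proof. intros. pose proof (sqrt_lt_R0 A H) as Hs. pose proof (sqrt_sqrt A (Rlt_le _ _ H)) as Ss.
  assert (E: sqrt A + D / (2 * sqrt A) = (sqrt A * sqrt A + (sqrt A * sqrt A + D)) / (2 * sqrt A)) by (field; lra).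
  rewrite Ss in E.
  assert (P: 0 <= sqrt A + D / (2 * sqrt A)).
  { rewrite E. apply Rmult_le_pos. lra. left; apply Rinv_0_lt_compat; lra. }
  rewrite <- (sqrt_pow2 (sqrt A + D / (2 * sqrt A))) by auto.
  apply sqrt_le_1; auto. apply pow2_ge_0.
  assert (E2: (sqrt A + D / (2 * sqrt A))^2 = A + D + (D / (2 * sqrt A))^2).
  { replace ((sqrt A + D / (2 * sqrt A))^2) with (sqrt A * sqrt A + 2 * sqrt A * (D / (2 * sqrt A)) + (D / (2 * sqrt A))^2) by ring.
    rewrite Ss. field. lra. }
  rewrite E2. pose proof (pow2_ge_0 (D / (2 * sqrt A))). lra. Qed.

Lemma enorm_vzero : enorm vzero = 0.
Proof. unfold enorm, dot, vzero; simpl. replace (0*0+0*0+0*0+0*0) with 0 by ring. apply sqrt_0. Qed.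

Lemma Q_vzero Q : goodQ Q -> Q vzero = 0.
Proof. intro H. replace vzero with (vscale 0 vzero) by (unfold vscale, vzero; simpl; f_equal; ring).
  rewrite goodQ_hom by auto. ring. Qed.

Lemma V4_ext a b : (forall i, dot i a = dot i b) -> a = b.
Proof. intro H. destruct a as [a0 a1 a2 a3], b as [b0 b1 b2 b3].
  pose proof (H (mkV4 1 0 0 0)). pose proof (H (mkV4 0 1 0 0)).
  pose proof (H (mkV4 0 0 1 0)). pose proof (H (mkV4 0 0 0 1)).
  unfold dot in *; simpl in *. f_equal; lra. Qed.

Lemma Nf_smooth eps Q : 0 < eps -> goodQ Q -> posQ Q -> smooth (Nf eps Q).
Proof. intros He H P x Hx1.
  pose proof (Nf_norm eps Q He H) as Hn.
  assert (Hx0: x <> vzero).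
  { intro e. subst. unfold Nf in Hx1. rewrite enorm_vzero, Q_vzero, sqrt_0 in Hx1 by auto. lra. }
  pose proof (enorm_pos_lt x Hx0) as Hnx. pose proof (P x Hx0) as HQ.
  pose proof (sqrt_lt_R0 _ HQ) as Hm.
  destruct (H x) as (A & g & (PA & Hg & Hxx & Hle) & U).
  specialize (U Hx0).
  set (nx := enorm x) in *. set (m := sqrt (Q x)) in *.
  set (a := vadd (vscale (eps / nx) x) (vscale (/ m) g)).
  assert (Da: forall y, dot a y = eps / nx * dot x y + / m * A x y).
  { intro y. unfold a. rewrite dot_add_l, !dot_scale_l, Hg. ring. }
  assert (Hmm: m * m = Q x) by (apply sqrt_sqrt; lra).
  assert (Hnn: nx * nx = dot x x) by apply enorm_sq.
  assert (Sup: forall y, dot a y <= Nf eps Q y).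
  { intro y. rewrite Da. unfold Nf.
    pose proof (enorm_cs x y). fold nx in H0. pose proof (Rle_abs (dot x y)).
    pose proof PA as (_ & _ & _ & Hp).
    assert (C: A x y <= sqrt (A x x) * sqrt (A y y)) by (apply le_sqrt_prod; auto; apply psd_cs; auto).
    rewrite Hxx in C. fold m in C.
    assert (sqrt (A y y) <= sqrt (Q y)) by (apply sqrt_le_1; auto; apply goodQ_nonneg; auto).
    assert (/ m * A x y <= sqrt (Q y)).
    { apply Rmult_le_reg_l with m; auto. replace (m * (/ m * A x y)) with (A x y) by (field; lra).
      pose proof (sqrt_pos (A y y)). nra. }
    assert (eps / nx * dot x y <= eps * enorm y).
    { apply Rmult_le_reg_l with (nx / eps). apply Rdiv_lt_0_compat; lra.
      replace (nx / eps * (eps / nx * dot x y)) with (dot x y) by (field; lra).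
      replace (nx / eps * (eps * enorm y)) with (nx * enorm y) by (field; lra). lra. }
    lra. }
  assert (Ax: dot a x = 1).
  { rewrite Da. rewrite <- Hnn, Hxx, <- Hmm. rewrite <- Hx1. unfold Nf. fold nx m. field; lra. }
  exists a. split.
  { split; auto. intros y Hy. pose proof (Sup y). lra. }
  intros b (Bx & By).
  assert (B1: forall y, dot b y <= Nf eps Q y).
  { intro y. destruct (classic (y = vzero)) as [e|ne].
    - subst. rewrite dot_vzero. destruct Hn as (Hn0 & _). apply Hn0.
    - destruct Hn as (Hn0 & Hn1 & Hn2 & Hn3).
      assert (Hs: 0 < Nf eps Q y).
      { destruct (Hn0 y) as [l|e]; auto. exfalso. apply ne, Hn1; auto. }
      pose proof (By (vscale (/ Nf eps Q y) y)) as K.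
      rewrite Hn2, Rabs_pos_eq in K by (left; apply Rinv_0_lt_compat; auto).
      rewrite Rinv_l in K by lra. rewrite dot_scale_r in K.
      specialize (K (Rle_refl _)).
      apply Rmult_le_reg_l with (/ Nf eps Q y). apply Rinv_0_lt_compat; auto.
      rewrite Rinv_l by lra. lra. }
  assert (B2: forall eta, 0 < eta -> exists r, 0 < r /\ forall h, enorm h <= r ->
             Nf eps Q (vadd x h) <= 1 + dot a h + eta * enorm h).
  { intros eta Heta. destruct (U (eta * m) ltac:(nra)) as (r1 & Hr1 & Ub).
    exists (Rmin r1 (nx * eta / eps)). split.
    { apply Rmin_glb_lt; auto. apply Rdiv_lt_0_compat; nra. }
    intros h Hh.
    assert (h1: enorm h <= r1) by (eapply Rle_trans; [exact Hh | apply Rmin_l]).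
    assert (h2: enorm h <= nx * eta / eps) by (eapply Rle_trans; [exact Hh | apply Rmin_r]).
    pose proof (Ub h h1) as Uh. pose proof (enorm_pos h) as Hh0.
    assert (E1: enorm (vadd x h) <= nx + (2 * dot x h + enorm h * enorm h) / (2 * nx)).
    { assert (Pd: 0 <= nx * nx + (2 * dot x h + enorm h * enorm h)).
      { rewrite Hnn, (enorm_sq h). replace (dot x x + (2 * dot x h + dot h h)) with (dot (vadd x h) (vadd x h)).
        apply dot_pos. rewrite dot_add_r, !dot_add_l, (dot_sym h x). ring. }
      unfold enorm at 1. rewrite dot_add_r, !dot_add_l, (dot_sym h x), <- (enorm_sq h), <- Hnn.
      replace (nx * nx + dot x h + (dot x h + enorm h * enorm h)) with (nx * nx + (2 * dot x h + enorm h * enorm h)) by ring.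
      assert (S: sqrt (nx * nx) = nx) by (apply sqrt_square; lra).
      pose proof (sqrt_up (nx * nx) (2 * dot x h + enorm h * enorm h)) as SU. rewrite S in SU.
      apply SU; auto. nra. }
    assert (E2: sqrt (Q (vadd x h)) <= m + (2 * dot g h + eta * m * enorm h) / (2 * m)).
    { eapply Rle_trans. apply sqrt_le_1. apply goodQ_nonneg; auto.
      2: exact Uh. pose proof (goodQ_nonneg Q (vadd x h) H). lra.
      replace (Q x + 2 * dot g h + eta * m * enorm h) with (Q x + (2 * dot g h + eta * m * enorm h)) by ring.
      fold m. apply sqrt_up; auto. pose proof (goodQ_nonneg Q (vadd x h) H). lra. }
    assert (E3: eps * (enorm h * enorm h) / (2 * nx) <= eta / 2 * enorm h).
    { apply Rmult_le_reg_l with (2 * nx / eps). apply Rdiv_lt_0_compat; lra.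
      replace (2 * nx / eps * (eps * (enorm h * enorm h) / (2 * nx))) with (enorm h * enorm h) by (field; lra).
      replace (2 * nx / eps * (eta / 2 * enorm h)) with ((nx * eta / eps) * enorm h) by (field; lra).
      apply Rmult_le_compat_r; auto. }
    rewrite Da. unfold Nf.
    assert (Hg2: dot g h = A x h) by (rewrite Hg; auto).
    assert (E4: eps * (nx + (2 * dot x h + enorm h * enorm h) / (2 * nx)) = eps * nx + eps / nx * dot x h + eps * (enorm h * enorm h) / (2 * nx)) by (field; lra).
    assert (E5: m + (2 * dot g h + eta * m * enorm h) / (2 * m) = m + / m * A x h + eta / 2 * enorm h) by (rewrite Hg2; field; lra).
    assert (Hx1': eps * nx + m = 1) by (unfold Nf in Hx1; fold nx m in Hx1; lra).
    assert (eps * enorm (vadd x h) <= eps * (nx + (2 * dot x h + enorm h * enorm h) / (2 * nx))) by (apply Rmult_le_compat_l; lra).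
    rewrite E4 in H0. rewrite E5 in E2. clearbody nx m a. lra. }
  set (w := vadd b (vscale (-1) a)).
  assert (B3: forall eta, 0 < eta -> enorm w <= eta).
  { intros eta Heta. destruct (B2 eta Heta) as (r & Hr & Hb).
    set (t := r / (enorm w + 1)).
    assert (Ht: 0 < t) by (unfold t; apply Rdiv_lt_0_compat; auto; pose proof (enorm_pos w); lra).
    set (h := vscale t w).
    assert (Hh: enorm h = t * enorm w) by (unfold h; rewrite enorm_scale, Rabs_pos_eq; lra).
    assert (Hhr: enorm h <= r).
    { rewrite Hh. unfold t. pose proof (enorm_pos w).
      apply Rmult_le_reg_r with (enorm w + 1). lra.
      replace (r / (enorm w + 1) * enorm w * (enorm w + 1)) with (r * enorm w) by (field; lra). nra. }
    pose proof (Hb h Hhr) as K. pose proof (B1 (vadd x h)) as K2.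
    rewrite dot_add_r, Bx in K2.
    assert (Dw: dot w h = dot b h - dot a h) by (unfold w; rewrite dot_add_l, dot_scale_l; ring).
    assert (dot w h <= eta * enorm h) by lra.
    rewrite Hh in H0. unfold h in H0. rewrite dot_scale_r, <- enorm_sq in H0.
    pose proof (enorm_pos w).
    assert (t * (enorm w * (enorm w - eta)) <= 0) by nra.
    assert (enorm w * (enorm w - eta) <= 0).
    { destruct (Rle_dec (enorm w * (enorm w - eta)) 0); auto. exfalso.
      assert (0 < t * (enorm w * (enorm w - eta))) by (apply Rmult_lt_0_compat; lra). lra. }
    destruct H1 as [p|z]; [|lra]. 
    assert (enorm w - eta <= 0).
    { destruct (Rle_dec (enorm w - eta) 0); auto. exfalso.
      assert (0 < enorm w * (enorm w - eta)) by (apply Rmult_lt_0_compat; lra). lra. }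
    lra. }
  assert (Hw: w = vzero).
  { apply enorm_zero. destruct (enorm_pos w) as [p|z]; auto.
    pose proof (B3 (enorm w / 2) ltac:(lra)). lra. }
  apply V4_ext. intro i. 
  assert (dot i w = 0) by (rewrite Hw; apply dot_vzero).
  unfold w in H0. rewrite dot_add_r, dot_scale_r in H0. lra. Qed.

Lemma Nf_sc eps Q : 0 < eps -> goodQ Q -> strictly_convex (Nf eps Q).
Proof. intros He H x y Hxy Hs.
  pose proof (Nf_norm eps Q He H) as (Hn0 & Hn1 & Hn2 & Hn3).
  assert (Nx: Nf eps Q x = 1).
  { pose proof (Hs 0 ltac:(lra)). replace (vadd (vscale (1 - 0) x) (vscale 0 y)) with x in H0; auto.
    destruct x, y; unfold vadd, vscale; simpl; f_equal; ring. }
  assert (Ny: Nf eps Q y = 1).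
  { pose proof (Hs 1 ltac:(lra)). replace (vadd (vscale (1 - 1) x) (vscale 1 y)) with y in H0; auto.
    destruct x, y; unfold vadd, vscale; simpl; f_equal; ring. }
  assert (Nh: Nf eps Q (vadd x y) = 2).
  { pose proof (Hs (1/2) ltac:(lra)). replace (vadd (vscale (1 - 1/2) x) (vscale (1/2) y)) with (vscale (1/2) (vadd x y)) in H0.
    rewrite Hn2, Rabs_pos_eq in H0 by lra. lra.
    destruct x, y; unfold vadd, vscale; simpl; f_equal; field. }
  unfold Nf in Nx, Ny, Nh.
  pose proof (enorm_tri x y). pose proof (M_tri Q x y H).
  assert (Eq: enorm (vadd x y) = enorm x + enorm y).
  { apply Rle_antisym; auto. apply Rmult_le_reg_l with eps; auto. lra. }
  assert (Dxy: dot x y = enorm x * enorm y).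
  { assert (dot (vadd x y) (vadd x y) = (enorm x + enorm y) * (enorm x + enorm y)) by (rewrite <- Eq; symmetry; apply enorm_sq).
    rewrite dot_add_r, !dot_add_l, <- (enorm_sq x), <- (enorm_sq y), (dot_sym y x) in H2. lra. }
  set (z := vadd (vscale (enorm y) x) (vscale (- enorm x) y)).
  assert (Z: z = vzero).
  { apply dot_zero. unfold z. rewrite !dot_add_r, !dot_add_l, !dot_scale_r, !dot_scale_l.
    rewrite (dot_sym y x), Dxy, <- (enorm_sq x), <- (enorm_sq y). ring. }
  assert (Hx0: x <> vzero).
  { intro e. subst. rewrite enorm_vzero, Q_vzero, sqrt_0 in Nx by auto. lra. }
  pose proof (enorm_pos_lt x Hx0) as P1. pose proof (enorm_pos y) as P2.
  assert (V: vscale (enorm y) x = vscale (enorm x) y).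
  { assert (E: vscale (enorm x) y = vadd (vscale (enorm y) x) (vscale (-1) z))
      by (unfold z; destruct x, y; unfold vadd, vscale; simpl; f_equal; ring).
    rewrite E, Z. destruct x; unfold vadd, vscale, vzero; simpl; f_equal; ring. }
  assert (Ey: enorm y = enorm x).
  { assert (W: Nf eps Q (vscale (enorm y) x) = Nf eps Q (vscale (enorm x) y)) by (rewrite V; auto).
    rewrite !Hn2, !Rabs_pos_eq in W by lra. replace (Nf eps Q x) with 1 in W by (unfold Nf; lra). replace (Nf eps Q y) with 1 in W by (unfold Nf; lra). lra. }
  rewrite Ey in V. apply Hxy. set (ex := enorm x) in *. clearbody ex.
  destruct x as [x0 x1 x2 x3], y as [y0 y1 y2 y3]; unfold vscale in V; injection V; intros.
  f_equal; apply Rmult_eq_reg_l with ex; lra. Qed.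

Lemma pow_ge1 d k : 0 <= d -> 1 <= (1 + d)^k.
Proof. intros. induction k; simpl. lra. nra. Qed.

Lemma SMQ_bound d rho vs y m : 0 < d < 1 -> 0 < rho ->
  (forall v, In v vs -> qv v y <= m) -> q0 rho y <= m ->
  SMQ d rho vs y <= m * (1 + d)^(length vs).
Proof. intros Hd Hr. induction vs as [|v r IH]; simpl; intros Hv H0.
  - lra.
  - assert (Hm: 0 <= m). { pose proof (goodQ_nonneg _ y (q0_good rho Hr)). lra. }
    pose proof (pow_ge1 d (length r) ltac:(lra)).
    assert (m <= m * (1 + d)^(length r)) by nra.
    replace (m * ((1 + d) * (1 + d) ^ length r)) with ((1 + d) * (m * (1 + d) ^ length r)) by ring.
    apply sm_le. lra. apply pow2_ge_0. apply goodQ_nonneg, SMQ_good; auto.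
    pose proof (Hv v (or_introl eq_refl)). lra.
    apply IH; auto. Qed.

Lemma SMQ_exact d rho pre w post y T th : 0 < d < 1 -> 0 < rho -> 0 <= th ->
  qv w y = T -> (forall v, In v (pre ++ post) -> qv v y <= th * T) -> q0 rho y <= th * T ->
  th * (1 + d)^(length post) * (1 + d) <= 1 - d ->
  SMQ d rho (pre ++ w :: post) y = T.
Proof. intros Hd Hr Ht HT Hv H0 Hth.
  assert (T0: 0 <= T) by (rewrite <- HT; apply pow2_ge_0).
  induction pre as [|v pre IH]; simpl.
  - rewrite HT. apply sm_eq_a. lra. auto. apply goodQ_nonneg, SMQ_good; auto.
    pose proof (SMQ_bound d rho post y (th * T) Hd Hr ltac:(intros; apply Hv; simpl; auto) H0).
    assert (0 <= th * T * (1 + d) ^ length post) by (pose proof (pow_ge1 d (length post) ltac:(lra)); apply Rmult_le_pos; [apply Rmult_le_pos|]; lra).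
    assert (SMQ d rho post y * (1 + d) <= th * T * (1 + d) ^ length post * (1 + d)) by (apply Rmult_le_compat_r; lra).
    assert (th * T * (1 + d) ^ length post * (1 + d) = T * (th * (1 + d) ^ length post * (1 + d))) by ring.
    assert (T * (th * (1 + d) ^ length post * (1 + d)) <= T * (1 - d)) by (apply Rmult_le_compat_l; auto).
    lra.
  - rewrite IH by (intros; apply Hv; simpl; auto).
    apply sm_eq_b. lra. apply pow2_ge_0. auto.
    pose proof (Hv v (or_introl eq_refl)).
    pose proof (pow_ge1 d (length post) ltac:(lra)).
    assert (th * (1 + d) <= 1 - d).
    { eapply Rle_trans; [|exact Hth]. apply Rmult_le_compat_r. lra.
      rewrite <- (Rmult_1_r th) at 1. apply Rmult_le_compat_l; auto. }
    assert (qv v y * (1 + d) <= th * T * (1 + d)) by (apply Rmult_le_compat_r; lra).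
    assert (th * T * (1 + d) = T * (th * (1 + d))) by ring.
    assert (T * (th * (1 + d)) <= T * (1 - d)) by (apply Rmult_le_compat_l; auto).
    lra. Qed.

Lemma bernoulli d n : 0 <= d -> INR n * d <= 1 -> (1 + d)^n * (1 - INR n * d) <= 1.
Proof. intros Hd. induction n as [|n IH]; intros H.
  - simpl; lra.
  - rewrite S_INR in *. change ((1+d)^(S n)) with ((1+d)*(1+d)^n).
    assert (INR n * d <= 1) by (pose proof (pos_INR n); nra).
    specialize (IH H0).
    pose proof (pow_ge1 d n Hd).
    assert ((1 + d) * (1 - (INR n + 1) * d) <= 1 - INR n * d).
    { pose proof (pos_INR n). assert (0 <= INR n * d * d) by (apply Rmult_le_pos; [apply Rmult_le_pos|]; lra). nra. }
    assert ((1 + d) ^ n * ((1 + d) * (1 - (INR n + 1) * d)) <= (1 + d)^n * (1 - INR n * d))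
      by (apply Rmult_le_compat_l; lra).
    nra. Qed.

Lemma choose_delta th K : 0 <= th < 1 -> exists d, 0 < d < 1 /\ th * (1 + d)^K * (1 + d) <= 1 - d.
Proof. intros Hth. set (n := S K).
  pose proof (pos_INR K) as HK.
  exists ((1 - th) / (4 * (INR K + 2))). set (d := (1 - th) / (4 * (INR K + 2))).
  assert (Hd: 0 < d) by (unfold d; apply Rdiv_lt_0_compat; lra).
  assert (Hd2: (INR K + 2) * d = (1 - th) / 4) by (unfold d; field; lra).
  assert (Hd1: d < 1) by nra.
  split; auto.
  replace (th * (1 + d) ^ K * (1 + d)) with (th * (1 + d) ^ (S K)) by (simpl; ring).
  pose proof (bernoulli d (S K) ltac:(lra)). rewrite S_INR in H.
  assert (HB: (INR K + 1) * d <= 1) by nra.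
  specialize (H HB).
  assert (0 < 1 - (INR K + 1) * d) by nra.
  assert (th <= (1 - d) * (1 - (INR K + 1) * d)).
  { assert (0 <= d * ((INR K + 1) * d)) by (apply Rmult_le_pos; [lra|nra]). nra. }
  pose proof (pow_ge1 d (S K) ltac:(lra)).
  assert (th * (1 + d) ^ S K * (1 - (INR K + 1) * d) <= (1 - d) * (1 - (INR K + 1) * d)).
  { assert (th * ((1 + d) ^ S K * (1 - (INR K + 1) * d)) <= th * 1) by (apply Rmult_le_compat_l; lra). nra. }
  apply Rmult_le_reg_r with (1 - (INR K + 1) * d); auto. Qed.

Lemma fin_bound {A} (l : list A) (F : A -> R) : (forall a, In a l -> F a < 1) ->
  exists th, 1/2 <= th < 1 /\ forall a, In a l -> F a <= th.
Proof. induction l as [|a l IH]; intros H.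
  - exists (1/2). split; [lra|]. simpl; tauto.
  - destruct IH as (th & Ht & Hb). { intros; apply H; simpl; auto. }
    exists (Rmax th (F a)). split.
    + split. eapply Rle_trans; [apply Ht| apply Rmax_l]. apply Rmax_lub_lt; [lra| apply H; simpl; auto].
    + intros b [e|i]. subst. apply Rmax_r. eapply Rle_trans; [apply Hb; auto | apply Rmax_l]. Qed.

Definition xpt (t : R) : V4 := mkV4 (cos t) (sin t) (cos (3 * t)) (sin (3 * t)).
Definition phi (y0 y : R) : R := (3 * y0^2 * y - y^3) / (2 * y0^3).
Definition ufun (ti tj : R) : V4 :=
  let c := (ti + tj) / 2 in
  let y0 := cos ((tj - ti) / 2) in
  let B := -1 / (8 * y0^3) in
  let A := 3 / (2 * y0) + 3 * B in
  mkV4 (A * cos c) (A * sin c) (B * cos (3 * c)) (B * sin (3 * c)).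

Lemma cos3 s : cos (3 * s) = 4 * cos s ^ 3 - 3 * cos s.
Proof. replace (3 * s) with (2 * s + s) by ring. rewrite cos_plus, cos_2a_cos, sin_2a.
  assert (S: sin s * sin s = 1 - cos s * cos s) by (pose proof (sin2 s) as S; unfold Rsqr in S; lra).
  replace (2 * sin s * cos s * sin s) with (2 * cos s * (sin s * sin s)) by ring. rewrite S. ring. Qed.

Lemma dot_ux ti tj t : cos ((tj - ti) / 2) <> 0 ->
  dot (ufun ti tj) (xpt t) = phi (cos ((tj - ti) / 2)) (cos (t - (ti + tj) / 2)).
Proof. intro Hy. unfold ufun, xpt, dot, phi; simpl.
  set (c := (ti + tj) / 2). set (y0 := cos ((tj - ti) / 2)).
  transitivity ((3 / (2 * y0) + 3 * (-1 / (8 * y0 ^ 3))) * cos (t - c) + (-1 / (8 * y0 ^ 3)) * cos (3 * (t - c))).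
  - replace (3 * (t - c)) with (3 * t - 3 * c) by ring. rewrite !cos_minus. field. auto.
  - rewrite cos3. field. auto. Qed.

Lemma PI_gt3 : 3 < PI.
Proof. pose proof PI2_3_2. lra. Qed.

Lemma expo ti tj t : 0 <= ti -> ti < tj -> tj < 1 -> 0 <= t < 1 ->
  ((t = ti \/ t = tj) -> dot (ufun ti tj) (xpt t) = 1) /\
  (t <> ti -> t <> tj -> -1 < dot (ufun ti tj) (xpt t) < 1).
Proof. intros H1 H2 H3 H4. pose proof PI_gt3 as HPI.
  set (h := (tj - ti) / 2).
  assert (Hh: 0 < h < 1/2) by (unfold h; lra).
  set (y0 := cos h).
  assert (Hy0: 1/2 < y0).
  { rewrite <- cos_PI3. apply cos_decreasing_1; lra. }
  assert (Hy1: y0 <= 1) by apply COS_bound.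
  assert (Hy0n: y0 <> 0) by lra.
  rewrite dot_ux by (fold h; fold y0; lra). fold h. fold y0.
  set (s := t - (ti + tj) / 2).
  assert (Hs: -1 < s < 1) by (unfold s; lra).
  set (y := cos s).
  assert (Hyp: 0 < y) by (apply cos_gt_0; lra).
  assert (Hy1': y <= 1) by apply COS_bound.
  split.
  - intros [e|e].
    + assert (s = - h) by (unfold s, h; rewrite e; field). unfold y. rewrite H, cos_neg. fold y0.
      unfold phi. field. auto.
    + assert (s = h) by (unfold s, h; rewrite e; field). unfold y. rewrite H. fold y0.
      unfold phi. field. auto.
  - intros n1 n2.
    assert (ny: y <> y0).
    { intro e. unfold y, y0 in e.
      destruct (Rle_dec 0 s).
      + apply cos_inj in e; try lra. apply n2. unfold s, h in e. lra.
      + rewrite <- (cos_neg s) in e. apply cos_inj in e; try lra.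
        apply n1. unfold s, h in e. lra. }
    assert (P3: 0 < 2 * y0 ^ 3) by (simpl; nra).
    split.
    + assert (E: phi y0 y + 1 = (2 * y0 - y) * (y + y0)^2 / (2 * y0^3)) by (unfold phi; field; auto).
      assert (0 < (2 * y0 - y) * (y + y0)^2 / (2 * y0^3)).
      { apply Rdiv_lt_0_compat; auto. apply Rmult_lt_0_compat. lra. apply pow_lt. lra. }
      lra.
    + assert (E: 1 - phi y0 y = (y - y0)^2 * (y + 2 * y0) / (2 * y0^3)) by (unfold phi; field; auto).
      assert (0 < (y - y0)^2 * (y + 2 * y0) / (2 * y0^3)).
      { apply Rdiv_lt_0_compat; auto. apply Rmult_lt_0_compat. 
        assert (y - y0 <> 0) by lra. replace ((y - y0)^2) with (Rsqr (y - y0)) by (unfold Rsqr; ring). apply Rsqr_pos_lt; auto. lra. }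
      lra. Qed.

Lemma NoDup_prod {A B} (l : list A) (l' : list B) : NoDup l -> NoDup l' -> NoDup (list_prod l l').
Proof. intros H H'. induction l as [|a l IH]; simpl. constructor.
  inversion H; subst. apply NoDup_app.
  - apply NoDup_map_NoDup_ForallPairs; auto. intros x y _ _ e. injection e; auto.
  - apply IH; auto.
  - intros p Hp Hq. apply in_map_iff in Hp. destruct Hp as (y & e & _). subst.
    apply in_prod_iff in Hq. tauto. Qed.

Definition tk (m k : nat) : R := INR k / INR m.

Lemma tk_range m k : (0 < m)%nat -> (k < m)%nat -> 0 <= tk m k < 1.
Proof. intros. unfold tk. assert (0 < INR m) by (apply lt_0_INR; auto).
  assert (INR k < INR m) by (apply lt_INR; auto). pose proof (pos_INR k). split.
  apply Rmult_le_pos; auto. left; apply Rinv_0_lt_compat; auto.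
  apply Rmult_lt_reg_r with (INR m); auto. unfold Rdiv. rewrite Rmult_assoc, Rinv_l; lra. Qed.

Lemma tk_lt m i j : (0 < m)%nat -> (i < j)%nat -> tk m i < tk m j.
Proof. intros. unfold tk. assert (0 < INR m) by (apply lt_0_INR; auto).
  apply Rmult_lt_compat_r. apply Rinv_0_lt_compat; auto. apply lt_INR; auto. Qed.

Lemma tk_inj m i j : (0 < m)%nat -> tk m i = tk m j -> i = j.
Proof. intros. destruct (PeanoNat.Nat.lt_trichotomy i j) as [l|[e|l]]; auto.
  - pose proof (tk_lt m i j H l). lra.
  - pose proof (tk_lt m j i H l). lra. Qed.

Definition pairs (m : nat) : list (nat * nat) :=
  filter (fun p => Nat.ltb (fst p) (snd p)) (list_prod (seq 0 m) (seq 0 m)).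

Lemma in_pairs m i j : In (i, j) (pairs m) <-> (i < j < m)%nat.
Proof. unfold pairs. rewrite filter_In, in_prod_iff, !in_seq. simpl.
  rewrite PeanoNat.Nat.ltb_lt. lia. Qed.

Lemma pairs_NoDup m : NoDup (pairs m).
Proof. apply NoDup_filter, NoDup_prod; apply seq_NoDup. Qed.

Definition mid (m : nat) (p : nat * nat) : V4 := midpoint (xpt (tk m (fst p))) (xpt (tk m (snd p))).
Definition uu (m : nat) (p : nat * nat) : V4 := ufun (tk m (fst p)) (tk m (snd p)).

Lemma dot_mid u x y : dot u (midpoint x y) = (dot u x + dot u y) / 2.
Proof. destruct u, x, y; unfold midpoint, dot, vadd, vscale; simpl. field. Qed.

Lemma dot_xpt t : dot (xpt t) (xpt t) = 2.
Proof. unfold xpt, dot; simpl. pose proof (sin2_cos2 t). pose proof (sin2_cos2 (3 * t)).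
  unfold Rsqr in *. lra. Qed.

Lemma f_vals m k l i : (2 <= m)%nat -> (k < l < m)%nat -> (i < m)%nat ->
  ((i = k \/ i = l) -> dot (uu m (k, l)) (xpt (tk m i)) = 1) /\
  (i <> k -> i <> l -> -1 < dot (uu m (k, l)) (xpt (tk m i)) < 1).
Proof. intros Hm Hkl Hi. unfold uu; simpl.
  pose proof (tk_range m k ltac:(lia) ltac:(lia)). pose proof (tk_range m l ltac:(lia) ltac:(lia)).
  pose proof (tk_range m i ltac:(lia) Hi). pose proof (tk_lt m k l ltac:(lia) ltac:(lia)).
  destruct (expo (tk m k) (tk m l) (tk m i) ltac:(lra) H2 ltac:(lra) H1) as (E1 & E2).
  split.
  - intros [e|e]; subst; apply E1; auto.
  - intros n1 n2. apply E2; intro e; apply tk_inj in e; lia. Qed.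

Lemma u_mid_self m p : (2 <= m)%nat -> In p (pairs m) -> dot (uu m p) (mid m p) = 1.
Proof. intros Hm Hp. destruct p as [i j]. apply in_pairs in Hp. unfold mid; simpl.
  rewrite dot_mid. destruct (f_vals m i j i Hm Hp ltac:(lia)) as (A & _).
  destruct (f_vals m i j j Hm Hp ltac:(lia)) as (B & _). rewrite A, B by auto. field. Qed.

Lemma u_mid_other m p q : (2 <= m)%nat -> In p (pairs m) -> In q (pairs m) -> p <> q ->
  Rabs (dot (uu m q) (mid m p)) < 1.
Proof. intros Hm Hp Hq Hpq. destruct p as [i j], q as [k l].
  apply in_pairs in Hp. apply in_pairs in Hq. unfold mid; simpl. rewrite dot_mid.
  destruct (f_vals m k l i Hm Hq ltac:(lia)) as (Ai & Bi).
  destruct (f_vals m k l j Hm Hq ltac:(lia)) as (Aj & Bj).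
  apply Rabs_def1.
  - destruct (PeanoNat.Nat.eq_dec i k) as [e1|e1]; destruct (PeanoNat.Nat.eq_dec i l) as [e2|e2];
    destruct (PeanoNat.Nat.eq_dec j k) as [e3|e3]; destruct (PeanoNat.Nat.eq_dec j l) as [e4|e4];
    try (exfalso; apply Hpq; f_equal; lia); try lia;
    repeat match goal with
    | H : ?a = ?a -> _ |- _ => specialize (H eq_refl)
    | H : ?a <> ?b -> ?c <> ?d -> _, n1 : ?a <> ?b, n2 : ?c <> ?d |- _ => specialize (H n1 n2)
    | H : (?a = ?b \/ ?c) -> _, e : ?a = ?b |- _ => specialize (H (or_introl e))
    | H : (?c \/ ?a = ?b) -> _, e : ?a = ?b |- _ => specialize (H (or_intror e))
    end; lra.
  - destruct (PeanoNat.Nat.eq_dec i k) as [e1|e1]; destruct (PeanoNat.Nat.eq_dec i l) as [e2|e2];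
    destruct (PeanoNat.Nat.eq_dec j k) as [e3|e3]; destruct (PeanoNat.Nat.eq_dec j l) as [e4|e4];
    try (exfalso; apply Hpq; f_equal; lia); try lia;
    repeat match goal with
    | H : ?a <> ?b -> ?c <> ?d -> _, n1 : ?a <> ?b, n2 : ?c <> ?d |- _ => specialize (H n1 n2)
    | H : (?a = ?b \/ ?c) -> _, e : ?a = ?b |- _ => specialize (H (or_introl e))
    | H : (?c \/ ?a = ?b) -> _, e : ?a = ?b |- _ => specialize (H (or_intror e))
    end; lra. Qed.

Definition peq (p q : nat * nat) : bool := Nat.eqb (fst p) (fst q) && Nat.eqb (snd p) (snd q).
Lemma peq_true p q : peq p q = true -> p = q.
Proof. destruct p, q; unfold peq; simpl. rewrite Bool.andb_true_iff, !PeanoNat.Nat.eqb_eq.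
  intros [-> ->]; auto. Qed.
Lemma peq_refl p : peq p p = true.
Proof. destruct p; unfold peq; simpl. rewrite !PeanoNat.Nat.eqb_refl; auto. Qed.

Lemma dot_mid_le m p : dot (mid m p) (mid m p) <= 2.
Proof. unfold mid. set (x := xpt (tk m (fst p))). set (y := xpt (tk m (snd p))).
  assert (E: dot (midpoint x y) (midpoint x y) = (dot x x + 2 * dot x y + dot y y) / 4).
  { unfold midpoint. rewrite dot_scale_l, dot_scale_r, dot_add_r, !dot_add_l, (dot_sym y x). field. }
  rewrite E. unfold x, y. rewrite !dot_xpt.
  pose proof (enorm_cs (xpt (tk m (fst p))) (xpt (tk m (snd p)))). pose proof (Rle_abs (dot (xpt (tk m (fst p))) (xpt (tk m (snd p))))).
  unfold enorm in H. rewrite !dot_xpt in H. rewrite sqrt_sqrt in H by lra. lra. Qed.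

Lemma dot_mid_lt m p : (2 <= m)%nat -> In p (pairs m) -> dot (mid m p) (mid m p) < 2.
Proof. intros Hm Hp. destruct p as [i j]. apply in_pairs in Hp. unfold mid; simpl.
  set (x := xpt (tk m i)). set (y := xpt (tk m j)).
  assert (E: dot (midpoint x y) (midpoint x y) = (dot x x + 2 * dot x y + dot y y) / 4).
  { unfold midpoint. rewrite dot_scale_l, dot_scale_r, dot_add_r, !dot_add_l, (dot_sym y x). field. }
  assert (Hxy: x <> y).
  { intro e. unfold x, y, xpt in e. injection e; intros.
    pose proof (tk_range m i ltac:(lia) ltac:(lia)). pose proof (tk_range m j ltac:(lia) ltac:(lia)).
    pose proof PI_gt3. apply cos_inj in H2; try lra. apply tk_inj in H2; lia. }
  set (z := vadd x (vscale (-1) y)).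
  assert (Z: z <> vzero). { intro e. apply Hxy. unfold z in e. destruct x, y; unfold vadd, vscale, vzero in e.
    injection e; intros. f_equal; lra. }
  pose proof (enorm_pos_lt z Z).
  assert (0 < dot z z) by (rewrite <- enorm_sq; apply Rmult_lt_0_compat; auto).
  unfold z in H0. rewrite dot_add_r, !dot_add_l, !dot_scale_r, !dot_scale_l in H0.
  rewrite E. unfold x, y in *. rewrite !dot_xpt in *. rewrite (dot_sym (xpt (tk m j))) in H0. lra. Qed.

Lemma enorm_mid_le m p : enorm (mid m p) <= 2.
Proof. pose proof (dot_mid_le m p). pose proof (enorm_sq (mid m p)). pose proof (enorm_pos (mid m p)).
  destruct (Rle_dec (enorm (mid m p)) 2); auto. nra. Qed.

Lemma construct (m : nat) : (2 <= m)%nat ->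
  exists N : V4 -> R, is_norm N /\ smooth N /\ strictly_convex N /\
    exists S : list V4, M_set N S /\ length S = m.
Proof. intros Hm.
  set (P := pairs m).
  destruct (fin_bound (list_prod P P)
    (fun pq => if peq (fst pq) (snd pq) then 0 else Rabs (dot (uu m (snd pq)) (mid m (fst pq)))))
    as (th0 & Hth0 & Hb).
  { intros [p q] Hpq. apply in_prod_iff in Hpq. simpl. destruct (peq p q) eqn:E. lra.
    apply u_mid_other; try tauto. intro e; subst; rewrite peq_refl in E; discriminate. }
  assert (Bnd: forall p q, In p P -> In q P -> p <> q -> Rabs (dot (uu m q) (mid m p)) <= th0).
  { intros p q Hp Hq Hpq. pose proof (Hb (p, q) ltac:(apply in_prod_iff; auto)). simpl in H.
    destruct (peq p q) eqn:E. apply peq_true in E; contradiction. auto. }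
  clear Hb.
  set (eps := (1 - th0) / 4).
  assert (He: 0 < eps) by (unfold eps; lra).
  set (kap := fun p => 1 - eps * enorm (mid m p)).
  assert (Hkap: forall p, (1 + th0) / 2 <= kap p <= 1).
  { intro p. unfold kap. pose proof (enorm_mid_le m p). pose proof (enorm_pos (mid m p)).
    split; [|nra]. assert (eps * enorm (mid m p) <= eps * 2) by (apply Rmult_le_compat_l; lra).
    unfold eps in *. lra. }
  set (vv := fun p => vscale (kap p) (uu m p)).
  set (rho := th0 ^ 2 / 2).
  assert (Hrho: 0 < rho) by (unfold rho; simpl; nra).
  set (th := (2 * th0 / (1 + th0))^2).
  assert (Hth: 0 <= th < 1).
  { unfold th. assert (0 <= 2 * th0 / (1 + th0) < 1).
    { split. apply Rmult_le_pos; [lra| left; apply Rinv_0_lt_compat; lra].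
      apply Rmult_lt_reg_r with (1 + th0). lra. unfold Rdiv. rewrite Rmult_assoc, Rinv_l; lra. }
    split. apply pow2_ge_0. simpl. nra. }
  destruct (choose_delta th (length P) Hth) as (d & Hd & Hdel).
  set (Q := SMQ d rho (map vv P)).
  destruct (SMQ_good d rho (map vv P) Hd Hrho) as (GQ & PQ). fold Q in GQ, PQ.
  exists (Nf eps Q). split; [apply Nf_norm; auto|]. split; [apply Nf_smooth; auto|].
  split; [apply Nf_sc; auto|].
  exists (map (fun k => xpt (tk m k)) (seq 0 m)).
  split; [|rewrite length_map, length_seq; auto].
  assert (Qv: forall p x, qv (vv p) x = kap p ^ 2 * (dot (uu m p) x) ^ 2).
  { intros. unfold qv, vv. rewrite dot_scale_l. ring. }
  assert (Nmid: forall p, In p P -> Nf eps Q (mid m p) = 1).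
  { intros p Hp. unfold Nf.
    destruct (in_split p P Hp) as (pre & post & EP).
    assert (QE: Q (mid m p) = kap p ^ 2).
    { unfold Q. rewrite EP, map_app. simpl.
      pose proof (Hkap p) as Kp.
      assert (Tth: th0 ^ 2 <= th * kap p ^ 2).
      { unfold th. assert (((1 + th0) / 2)^2 <= kap p ^ 2) by (simpl; nra).
        assert (E: th0^2 = (2 * th0 / (1 + th0))^2 * ((1 + th0)/2)^2) by (field; lra).
        rewrite E. apply Rmult_le_compat_l. apply pow2_ge_0. auto. }
      apply (SMQ_exact d rho (map vv pre) (vv p) (map vv post) (mid m p) (kap p ^ 2) th); auto; try lra.
      - rewrite Qv, u_mid_self by (auto; lia). ring.
      - intros v Hv. rewrite <- map_app in Hv. apply in_map_iff in Hv. destruct Hv as (q & <- & Hq).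
        assert (Hqp: q <> p). { intro e; subst. eapply NoDup_remove_2; [|exact Hq]. rewrite <- EP. apply pairs_NoDup. }
        assert (HqP: In q P). { rewrite EP. apply in_app_or in Hq. apply in_or_app. simpl. tauto. }
        rewrite Qv. pose proof (Bnd p q Hp HqP (not_eq_sym Hqp)) as B.
        pose proof (Hkap q).
        assert ((dot (uu m q) (mid m p))^2 <= th0^2).
        { rewrite <- (pow2_abs (dot _ _)). apply pow_incr. split; auto. apply Rabs_pos. }
        assert (kap q ^ 2 <= 1) by (simpl; nra).
        assert (kap q ^ 2 * dot (uu m q) (mid m p) ^ 2 <= 1 * th0 ^ 2).
        { apply Rmult_le_compat; auto; apply pow2_ge_0. }
        lra.
      - unfold q0, rho. pose proof (dot_mid_le m p). assert (0 <= th0^2) by apply pow2_ge_0.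
        assert (th0 ^ 2 / 2 * dot (mid m p) (mid m p) <= th0^2 / 2 * 2) by (apply Rmult_le_compat_l; lra).
        lra.
      - eapply Rle_trans; [|exact Hdel]. apply Rmult_le_compat_r. lra.
        apply Rmult_le_compat_l. lra. apply Rle_pow. lra. rewrite ?length_map, EP, length_app; simpl; lia. }
    rewrite QE. pose proof (Hkap p). rewrite sqrt_pow2 by lra. unfold kap. ring. }
  assert (Hm0: (0 < m)%nat) by lia.
  split; [|split].
  - apply NoDup_map_NoDup_ForallPairs; [|apply seq_NoDup].
    intros a b Ha Hb e. apply in_seq in Ha. apply in_seq in Hb.
    unfold xpt in e. injection e; intros.
    pose proof (tk_range m a Hm0 ltac:(lia)). pose proof (tk_range m b Hm0 ltac:(lia)).
    pose proof PI_gt3. apply cos_inj in H2; try lra. apply tk_inj in H2; auto.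
  - intros x Hx. apply in_map_iff in Hx. destruct Hx as (i & <- & Hi). apply in_seq in Hi.
    set (j := if Nat.eqb i 0 then 1%nat else 0%nat).
    assert (Hj: j <> i /\ (j < m)%nat) by (unfold j; destruct (Nat.eqb_spec i 0); lia).
    set (p := (Nat.min i j, Nat.max i j)).
    assert (Hp: In p P) by (unfold P, p; apply in_pairs; lia).
    assert (Hv: In (vv p) (map vv P)) by (apply in_map; auto).
    pose proof (SMQ_ge d rho (map vv P) (vv p) (xpt (tk m i)) Hd Hrho Hv) as G. fold Q in G.
    rewrite Qv in G.
    destruct (f_vals m (Nat.min i j) (Nat.max i j) i Hm ltac:(lia) ltac:(lia)) as (F1 & _).
    unfold p in G. rewrite F1 in G by lia. fold p in G.
    pose proof (Hkap p).
    assert (S1: kap p <= sqrt (Q (xpt (tk m i)))).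
    { rewrite <- (sqrt_pow2 (kap p)) by lra. apply sqrt_le_1. apply pow2_ge_0.
      apply goodQ_nonneg; auto. lra. }
    assert (Lt: enorm (mid m p) < enorm (xpt (tk m i))).
    { unfold enorm. apply sqrt_lt_1. apply dot_pos. apply dot_pos. rewrite dot_xpt.
      apply dot_mid_lt; auto. }
    unfold Nf. unfold kap in S1.
    assert (eps * enorm (mid m p) < eps * enorm (xpt (tk m i))) by (apply Rmult_lt_compat_l; auto).
    lra.
  - intros x y Hx Hy Hxy. apply in_map_iff in Hx. destruct Hx as (i & <- & Hi). apply in_seq in Hi.
    apply in_map_iff in Hy. destruct Hy as (j & <- & Hj). apply in_seq in Hj.
    assert (Hij: i <> j) by (intro e; subst; auto).
    destruct (PeanoNat.Nat.lt_gt_cases i j) as [[l|l] _]; [exact Hij| |].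
    + assert (Hp: In (i, j) P) by (apply in_pairs; lia).
      pose proof (Nmid (i, j) Hp). unfold mid in H; simpl in H. auto.
    + assert (Hp: In (j, i) P) by (apply in_pairs; lia).
      pose proof (Nmid (j, i) Hp). unfold mid in H; simpl in H.
      replace (midpoint (xpt (tk m i)) (xpt (tk m j))) with (midpoint (xpt (tk m j)) (xpt (tk m i))); auto.
      unfold midpoint, vadd, vscale; simpl; f_equal; ring. Qed.

Theorem theorem5 : forall n : nat, (1 <= n)%nat ->
  exists N : V4 -> R, is_norm N /\ smooth N /\ strictly_convex N /\
    exists S : list V4, M_set N S /\ (n <= length S)%nat.
Proof.
  intros n Hn. destruct (construct (S n) ltac:(lia)) as (N & H1 & H2 & H3 & S & HS & HL).
  exists N. split; auto. split; auto. split; auto. exists S. split; auto. lia.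
Qed.
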